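(* Every consistent theory $T$ of $L([1],[\omega],\mathtt u,\mathtt U)$ can be extended to a complete theory, i.e. there is a theory $T^*\supseteq T$ that is consistent and such that for every formula $\phi$, $T^*\vdash\phi$ or $T^*\vdash\neg\phi$.
   Context: Fix $Var=\{p_n : n\in\omega\}$. The formulas of $L([1],[\omega],\mathtt u,\mathtt U)$ form the smallest set containing $Var$ and closed under $\neg\phi$, $[1]\phi$, $[\omega]\phi$, $(\phi\wedge\psi)$, $(\phi\,\mathtt u\,\psi)$, $(\phi\,\mathtt U\,\psi)$. Abbreviations: $\vee,\to,\leftrightarrow$ as usual; $\mathtt f\phi:=(\phi\to\phi)\,\mathtt u\,\phi$, $\mathtt g\phi:=\neg\mathtt f\neg\phi$; $[a]^0\phi:=\phi$, $[a]^{n+1}\phi:=[a][a]^n\phi$ for $a\in\{1,\omega\}$. A theory is a nonempty set of formulas. Proof system. Axioms: all instances of A1 substitution instances of classical tautologies; A2 $[1][\omega]\phi\leftrightarrow[\omega]\phi$; A3 $\neg[a]\phi\leftrightarrow[a]\neg\phi$ ($a\in\{1,\omega\}$); A4 $[a](\phi*\psi)\leftrightarrow([a]\phi*[a]\psi)$ ($a\in\{1,\omega\}$, $*\in\{\wedge,\vee,\to,\leftrightarrow\}$); A5 $\psi\to\phi\,\mathtt u\,\psi$; A6 $\phi\,\mathtt u\,\psi\to\phi\,\mathtt U\,\psi$; A7 $\big(\bigwedge_{k=0}^n[1]^k(\phi\wedge\neg\psi)\wedge[1]^{n+1}\psi\big)\to\phi\,\mathtt u\,\psi$ ($n\in\omega$);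 A8 $\big(\bigwedge_{k=0}^n[\omega]^k\mathtt g(\phi\wedge\neg\psi)\wedge[\omega]^{n+1}(\phi\,\mathtt u\,\psi)\big)\to\phi\,\mathtt U\,\psi$ ($n\in\omega$). Rules: R1 from $\phi$ and $\phi\to\psi$ infer $\psi$; R2 from $\phi$ infer $[a]\phi$, $a\in\{1,\omega\}$; R3 from $\theta\to\neg\psi$ and all $\theta\to\big(\bigvee_{k=0}^n[1]^k(\neg\phi\vee\psi)\vee[1]^{n+1}\neg\psi\big)$, $n\in\omega$, infer $\theta\to\neg(\phi\,\mathtt u\,\psi)$; R4 from $\theta\to\neg(\phi\,\mathtt u\,\psi)$ and all $\theta\to\big(\bigvee_{k=0}^n[\omega]^k\neg\mathtt g(\phi\wedge\neg\psi)\vee[\omega]^{n+1}\neg(\phi\,\mathtt u\,\psi)\big)$, $n\in\omega$, infer $\theta\to\neg(\phi\,\mathtt U\,\psi)$. $\vdash\phi$ ($\phi$ is a theorem) iff there is a sequence $(\phi_\beta)_{\beta\le\alpha}$, $\alpha$ a countable ordinal, with $\phi_\alpha=\phi$ and each $\phi_\beta$ an axiom or obtained from earlier members by a rule. $T\vdash\phi$ iff there is such a sequence in which each member is an axiom, a member of $T$, or obtained from earlier members by a rule, where R2 may only be applied to theorems. A theory $T$ is consistent iff there is no formula $\chi$ with $T\vdash\chi$ and $T\vdash\neg\chi$. *)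

(* Defs.v *)
From Stdlib Require Import Bool.

Inductive modality : Type := M1 | MW.

Inductive form : Type :=
| Var   : nat -> form
| Neg   : form -> form
| Box   : modality -> form -> form
| And   : form -> form -> form
| Until : form -> form -> form
| UUntil : form -> form -> form.

Definition Or  (a b : form) : form := Neg (And (Neg a) (Neg b)).
Definition Imp (a b : form) : form := Neg (And a (Neg b)).
Definition Iff (a b : form) : form := And (Imp a b) (Imp b a).
Definition Ff (a : form) : form := Until (Imp a a) a.
Definition Gg (a : form) : form := Neg (Ff (Neg a)).

Fixpoint boxn (m : modality) (n : nat) (a : form) : form :=
  match n with 0 => a | S k => Box m (boxn m k a) end.

Fixpoint bigAnd (n : nat) (F : nat -> form) : form :=
  match n with 0 => F 0 | S k => And (bigAnd k F) (F (S k)) end.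
Fixpoint bigOr (n : nat) (F : nat -> form) : form :=
  match n with 0 => F 0 | S k => Or (bigOr k F) (F (S k)) end.

(* Substitution instances of classical tautologies: formulas true under every
   boolean assignment to their maximal non-boolean (non-Neg, non-And)
   subformulas. *)
Fixpoint beval (v : form -> bool) (a : form) : bool :=
  match a with
  | Neg b => negb (beval v b)
  | And b c => beval v b && beval v c
  | _ => v a
  end.
Definition taut_instance (a : form) : Prop := forall v, beval v a = true.

Inductive IsAxiom : form -> Prop :=
| A1 a : taut_instance a -> IsAxiom a
| A2 a : IsAxiom (Iff (Box M1 (Box MW a)) (Box MW a))
| A3 m a : IsAxiom (Iff (Neg (Box m a)) (Box m (Neg a)))
| A4_and m a b : IsAxiom (Iff (Box m (And a b)) (And (Box m a) (Box m b)))
| A4_or  m a b : IsAxiom (Iff (Box m (Or a b)) (Or (Box m a) (Box m b)))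
| A4_imp m a b : IsAxiom (Iff (Box m (Imp a b)) (Imp (Box m a) (Box m b)))
| A4_iff m a b : IsAxiom (Iff (Box m (Iff a b)) (Iff (Box m a) (Box m b)))
| A5 a b : IsAxiom (Imp b (Until a b))
| A6 a b : IsAxiom (Imp (Until a b) (UUntil a b))
| A7 a b n : IsAxiom (Imp (And (bigAnd n (fun k => boxn M1 k (And a (Neg b))))
                             (boxn M1 (S n) b))
                        (Until a b))
| A8 a b n : IsAxiom (Imp (And (bigAnd n (fun k => boxn MW k (Gg (And a (Neg b)))))
                             (boxn MW (S n) (Until a b)))
                        (UUntil a b)).

Definition R3prem (a b : form) (n : nat) : form :=
  Or (bigOr n (fun k => boxn M1 k (Or (Neg a) b))) (boxn M1 (S n) (Neg b)).
Definition R4prem (a b : form) (n : nat) : form :=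
  Or (bigOr n (fun k => boxn MW k (Neg (Gg (And a (Neg b))))))
     (boxn MW (S n) (Neg (Until a b))).

(* Theorems: least set containing the axioms and closed under R1-R4.
   (Equivalent to derivability by sequences of countable ordinal length.) *)
Inductive Thm : form -> Prop :=
| T_ax a : IsAxiom a -> Thm a
| T_mp a b : Thm a -> Thm (Imp a b) -> Thm b
| T_nec m a : Thm a -> Thm (Box m a)
| T_R3 th a b : Thm (Imp th (Neg b)) -> (forall n, Thm (Imp th (R3prem a b n))) ->
    Thm (Imp th (Neg (Until a b)))
| T_R4 th a b : Thm (Imp th (Neg (Until a b))) ->
    (forall n, Thm (Imp th (R4prem a b n))) ->
    Thm (Imp th (Neg (UUntil a b))).

Definition theory := form -> Prop.

(* T |- phi : R2 may only be applied to theorems. *)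
Inductive Prv (T : theory) : form -> Prop :=
| P_ax a : IsAxiom a -> Prv T a
| P_hyp a : T a -> Prv T a
| P_mp a b : Prv T a -> Prv T (Imp a b) -> Prv T b
| P_nec m a : Thm a -> Prv T (Box m a)
| P_R3 th a b : Prv T (Imp th (Neg b)) -> (forall n, Prv T (Imp th (R3prem a b n))) ->
    Prv T (Imp th (Neg (Until a b)))
| P_R4 th a b : Prv T (Imp th (Neg (Until a b))) ->
    (forall n, Prv T (Imp th (R4prem a b n))) ->
    Prv T (Imp th (Neg (UUntil a b))).

Definition is_theory (T : theory) : Prop := exists a, T a.
Definition consistent (T : theory) : Prop := ~ exists c, Prv T c /\ Prv T (Neg c).

(* Main.v *)
Require Import Defs.
From Stdlib Require Import Classical ClassicalEpsilon Arith Lia Cantor.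

Ltac taut := let v := fresh "v" in intro v; unfold Imp, Or, Iff in *; simpl;
  repeat match goal with
  | |- context [beval v ?x] => destruct (beval v x)
  | |- context [v ?x] => destruct (v x)
  end; reflexivity.

Lemma Prv_taut1 T a b : Prv T a -> taut_instance (Imp a b) -> Prv T b.
Proof. intros Ha H. eapply P_mp; [exact Ha| apply P_ax, A1, H]. Qed.

Lemma Prv_taut2 T a b c : Prv T a -> Prv T b -> taut_instance (Imp a (Imp b c)) -> Prv T c.
Proof. intros Ha Hb H. eapply P_mp; [exact Hb|]. eapply P_mp; [exact Ha| apply P_ax, A1, H]. Qed.

Lemma Prv_mono (T T' : theory) f : (forall g, T g -> T' g) -> Prv T f -> Prv T' f.
Proof.
  intros HT H; induction H.
  - now apply P_ax.
  - now apply P_hyp, HT.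
  - exact (P_mp _ _ _ IHPrv1 IHPrv2).
  - now apply P_nec.
  - now apply P_R3.
  - now apply P_R4.
Qed.

Definition add (T : theory) (p : form) : theory := fun f => T f \/ f = p.

Lemma deduction T p f : Prv (add T p) f -> Prv T (Imp p f).
Proof.
  intro H; induction H.
  - eapply Prv_taut1; [apply P_ax; eassumption|]. taut.
  - destruct H as [H|H].
    + eapply Prv_taut1; [apply P_hyp; eassumption|]. taut.
    + subst. apply P_ax, A1. taut.
  - eapply Prv_taut2; [exact IHPrv1 | exact IHPrv2|]. taut.
  - apply (Prv_taut1 _ _ _ (P_nec _ m _ H)). taut.
  - eapply Prv_taut1 with (a := Imp (And p th) (Neg (Until a b))); [|taut].
    apply P_R3.
    + eapply Prv_taut1; [exact IHPrv|]. taut.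
    + intro n. eapply Prv_taut1; [exact (H1 n)|]. taut.
  - eapply Prv_taut1 with (a := Imp (And p th) (Neg (UUntil a b))); [|taut].
    apply P_R4.
    + eapply Prv_taut1; [exact IHPrv|]. taut.
    + intro n. eapply Prv_taut1; [exact (H1 n)|]. taut.
Qed.

Lemma cut T p f : Prv T p -> Prv (add T p) f -> Prv T f.
Proof. intros Hp H. exact (P_mp _ _ _ Hp (deduction _ _ _ H)). Qed.

Lemma incons_add T p : ~ consistent (add T p) -> Prv T (Neg p).
Proof.
  intro H. unfold consistent in H. apply NNPP in H. destruct H as [c [H1 H2]].
  apply deduction in H1, H2. eapply Prv_taut2; [exact H1|exact H2|]. taut.
Qed.

Fixpoint dec (k n : nat) : form :=
  match k with
  | 0 => Var n
  | S k => let (t, r) := of_nat n in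
      match t with
      | 0 => Var r
      | 1 => Neg (dec k r)
      | 2 => let (x, y) := of_nat r in Box (match x with 0 => M1 | _ => MW end) (dec k y)
      | 3 => let (x, y) := of_nat r in And (dec k x) (dec k y)
      | 4 => let (x, y) := of_nat r in Until (dec k x) (dec k y)
      | _ => let (x, y) := of_nat r in UUntil (dec k x) (dec k y)
      end
  end.

Lemma dec_surj f : exists n d, forall k, d <= k -> dec k n = f.
Proof.
  induction f.
  - exists (to_nat (0, n)), 1. intros [|k] Hk; [lia|]. cbn [dec]. rewrite cancel_of_to. cbn iota beta. reflexivity.
  - destruct IHf as [n [d H]]. exists (to_nat (1, n)), (S d).
    intros [|k] Hk; [lia|]. cbn [dec]. rewrite cancel_of_to. cbn iota beta. rewrite H by lia. reflexivity.
  - destruct IHf as [n [d H]].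
    exists (to_nat (2, to_nat (match m with M1 => 0 | MW => 1 end, n))), (S d).
    intros [|k] Hk; [lia|]. cbn [dec]. rewrite !cancel_of_to. cbn iota beta. rewrite H by lia. destruct m; reflexivity.
  - destruct IHf1 as [n1 [d1 H1]], IHf2 as [n2 [d2 H2]].
    exists (to_nat (3, to_nat (n1, n2))), (S (d1 + d2)).
    intros [|k] Hk; [lia|]. cbn [dec]. rewrite !cancel_of_to. cbn iota beta. rewrite H1, H2 by lia. reflexivity.
  - destruct IHf1 as [n1 [d1 H1]], IHf2 as [n2 [d2 H2]].
    exists (to_nat (4, to_nat (n1, n2))), (S (d1 + d2)).
    intros [|k] Hk; [lia|]. cbn [dec]. rewrite !cancel_of_to. cbn iota beta. rewrite H1, H2 by lia. reflexivity.
  - destruct IHf1 as [n1 [d1 H1]], IHf2 as [n2 [d2 H2]].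
    exists (to_nat (5, to_nat (n1, n2))), (S (d1 + d2)).
    intros [|k] Hk; [lia|]. cbn [dec]. rewrite !cancel_of_to. cbn iota beta. rewrite H1, H2 by lia. reflexivity.
Qed.

Definition enum (n : nat) : form := let (k, m) := of_nat n in dec k m.

Lemma enum_surj f : exists i, enum i = f.
Proof.
  destruct (dec_surj f) as [n [d H]]. exists (to_nat (d, n)).
  unfold enum. rewrite cancel_of_to. apply H. lia.
Qed.

Lemma cons_sub (T T' : theory) : (forall f, T' f -> T f) -> consistent T -> consistent T'.
Proof. intros H HT [c [H1 H2]]. apply HT. exists c. split; eapply Prv_mono; eauto. Qed.

Lemma cons_add T p : consistent T -> Prv T p -> consistent (add T p).
Proof. intros HT Hp [c [H1 H2]]. apply HT. exists c. split; eapply cut; eauto. Qed.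

Definition good (T : theory) (phi w : form) : Prop :=
  consistent (add (add T (Neg phi)) w) /\
  (forall th a b, phi = Imp th (Neg (Until a b)) ->
     w = Neg (Imp th (Neg b)) \/ exists n, w = Neg (Imp th (R3prem a b n))) /\
  (forall th a b, phi = Imp th (Neg (UUntil a b)) ->
     w = Neg (Imp th (Neg (Until a b))) \/ exists n, w = Neg (Imp th (R4prem a b n))).

Lemma neg_prv T w : ~ consistent (add T (Neg w)) -> Prv T w.
Proof. intro H. apply incons_add in H. eapply Prv_taut1; [exact H|]. taut. Qed.

Lemma good_ex T phi : consistent T -> ~ consistent (add T phi) -> exists w, good T phi w.
Proof.
  intros HT Hphi. pose proof (incons_add _ _ Hphi) as Hn.
  assert (HS : consistent (add T (Neg phi))) by (apply cons_add; auto).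
  destruct (classic (exists th a b, phi = Imp th (Neg (Until a b)))) as [[th [a [b E]]]|N1].
  { apply NNPP; intro Hno. apply HS. exists phi. split; [|apply P_hyp; now right].
    subst phi. apply P_R3.
    - apply neg_prv. intro Hc. apply Hno. exists (Neg (Imp th (Neg b))). split; [exact Hc|split].
      + intros th' a' b' E; injection E; intros; subst; auto.
      + intros th' a' b' E; inversion E.
    - intro n. apply neg_prv. intro Hc. apply Hno. exists (Neg (Imp th (R3prem a b n))). split; [exact Hc|split].
      + intros th' a' b' E; injection E; intros; subst; eauto.
      + intros th' a' b' E; inversion E. }
  destruct (classic (exists th a b, phi = Imp th (Neg (UUntil a b)))) as [[th [a [b E]]]|N2].
  { apply NNPP; intro Hno. apply HS. exists phi. split; [|apply P_hyp; now right].
    subst phi. apply P_R4.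
    - apply neg_prv. intro Hc. apply Hno. exists (Neg (Imp th (Neg (Until a b)))). split; [exact Hc|split].
      + intros th' a' b' E; inversion E.
      + intros th' a' b' E; injection E; intros; subst; auto.
    - intro n. apply neg_prv. intro Hc. apply Hno. exists (Neg (Imp th (R4prem a b n))). split; [exact Hc|split].
      + intros th' a' b' E; inversion E.
      + intros th' a' b' E; injection E; intros; subst; eauto. }
  exists (Neg phi). split; [|split].
  - apply cons_add; auto. apply P_hyp; now right.
  - intros th a b E; exfalso; apply N1; eauto.
  - intros th a b E; exfalso; apply N2; eauto.
Qed.

Definition wit (T : theory) (phi : form) : form := epsilon (inhabits (Neg phi)) (good T phi).

Definition step (T : theory) (phi : form) : theory := fun f =>
  T f \/ (consistent (add T phi) /\ f = phi) \/
  (~ consistent (add T phi) /\ (f = Neg phi \/ f = wit T phi)).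

Lemma wit_good T phi : consistent T -> ~ consistent (add T phi) -> good T phi (wit T phi).
Proof. intros. unfold wit. apply epsilon_spec. now apply good_ex. Qed.

Lemma step_cons T phi : consistent T -> consistent (step T phi).
Proof.
  intro HT. destruct (classic (consistent (add T phi))) as [C|C].
  - apply (cons_sub (add T phi)); auto.
    intros f [H|[[_ H]|[H _]]]; [left; auto|right; auto|contradiction].
  - destruct (wit_good T phi HT C) as [G _].
    refine (cons_sub _ _ _ G).
    intros f [H|[[H _]|[_ [H|H]]]]; [left; left; auto|contradiction|left; right; auto|right; auto].
Qed.

Fixpoint stage (T : theory) (i : nat) : theory :=
  match i with 0 => T | S i => step (stage T i) (enum i) end.

Lemma stage_cons T i : consistent T -> consistent (stage T i).
Proof. intro H; induction i; simpl; auto using step_cons. Qed.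

Lemma stage_mono T i j f : i <= j -> stage T i f -> stage T j f.
Proof. intro H; induction H; simpl; auto. intro; left; auto. Qed.

Definition Ts (T : theory) : theory := fun f => exists i, stage T i f.

Lemma Ts_or_neg T f : Ts T f \/ Ts T (Neg f).
Proof.
  destruct (enum_surj f) as [i E].
  destruct (classic (consistent (add (stage T i) f))) as [C|C].
  - left. exists (S i). simpl. right; left. rewrite E. auto.
  - right. exists (S i). simpl. right; right. rewrite E. auto.
Qed.

Section S.
Variable T : theory.
Hypothesis HT : consistent T.

Lemma Ts_both f : Ts T f -> Ts T (Neg f) -> False.
Proof.
  intros [i Hi] [j Hj]. apply (stage_cons T (i + j) HT). exists f. split; apply P_hyp.
  - apply (stage_mono T i); [lia|auto].
  - apply (stage_mono T j); [lia|auto].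
Qed.

Lemma prv_stage i c : Prv (stage T i) c -> Ts T c.
Proof.
  intro H. destruct (Ts_or_neg T c) as [|[j Hj]]; auto. exfalso.
  apply (stage_cons T (i + j) HT). exists c. split.
  - eapply Prv_mono; [|exact H]. intros; apply (stage_mono T i); [lia|auto].
  - apply P_hyp. apply (stage_mono T j); [lia|auto].
Qed.

Lemma Ts_closed c : Prv (Ts T) c -> Ts T c.
Proof.
  intro H; induction H.
  - apply (prv_stage 0). now apply P_ax.
  - auto.
  - destruct IHPrv1 as [i Hi], IHPrv2 as [j Hj]. apply (prv_stage (i + j)).
    apply (P_mp _ a); apply P_hyp; [apply (stage_mono T i)|apply (stage_mono T j)]; auto; lia.
  - apply (prv_stage 0). now apply P_nec.
  - destruct (enum_surj (Imp th (Neg (Until a b)))) as [i E].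
    destruct (classic (consistent (add (stage T i) (enum i)))) as [C|C].
    + exists (S i). simpl. right; left. rewrite <- E. auto.
    + exfalso. destruct (wit_good _ _ (stage_cons T i HT) C) as [_ [G _]].
      assert (Hw : Ts T (wit (stage T i) (enum i))) by (exists (S i); simpl; right; right; auto).
      destruct (G th a b E) as [W|[n W]]; rewrite W in Hw.
      * exact (Ts_both _ IHPrv Hw).
      * exact (Ts_both _ (H1 n) Hw).
  - destruct (enum_surj (Imp th (Neg (UUntil a b)))) as [i E].
    destruct (classic (consistent (add (stage T i) (enum i)))) as [C|C].
    + exists (S i). simpl. right; left. rewrite <- E. auto.
    + exfalso. destruct (wit_good _ _ (stage_cons T i HT) C) as [_ [_ G]].
      assert (Hw : Ts T (wit (stage T i) (enum i))) by (exists (S i); simpl; right; right; auto).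
      destruct (G th a b E) as [W|[n W]]; rewrite W in Hw.
      * exact (Ts_both _ IHPrv Hw).
      * exact (Ts_both _ (H1 n) Hw).
Qed.
End S.

Theorem mainTheorem6 (T : theory) :
  is_theory T -> consistent T ->
  exists Ts : theory,
    (forall a, T a -> Ts a) /\ is_theory Ts /\ consistent Ts /\
    (forall a, Prv Ts a \/ Prv Ts (Neg a)).
Proof.
  intros [a0 Ha0] HT. exists (Ts T). split; [|split; [|split]].
  - intros a Ha. exists 0. exact Ha.
  - exists a0. exists 0. exact Ha0.
  - intros [c [H1 H2]]. apply (Ts_both T HT c); apply Ts_closed; auto.
  - intro a. destruct (Ts_or_neg T a); [left|right]; apply P_hyp; auto.
Qed.
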